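(* Let $T$ be a graph on a countably infinite set $X$ with maximum degree at most $d$, let $\mu$ be a $T$-invariant mean on $X$ with associated regular Borel probability measure $\bar\mu$ on $\beta X$, and let $\mathcal G(T)$ be the associated graphing on $\beta X$. Then for every $r\ge1$ and every rooted finite graph $H$ of radius $r$ with maximum degree at most $d$, $$\mu(A(T,H))=\bar\mu(A(\mathcal G(T),H)).$$
   Context: A mean on $X$ is a finitely additive $\mu:2^X\to[0,1]$ with $\mu(X)=1$; $\bar\mu$ is the unique regular Borel probability on the Stone–Čech compactification $\beta X$ (ultrafilters on $X$) with $\bar\mu(U_A)=\mu(A)$, $U_A=\{\omega:A\in\omega\}$. A mean is $T$-invariant if it is invariant under some (equivalently every) action of a finitely generated group on $X$ whose Schreier graph with respect to some finite symmetric generating set is $T$ (Schreier graph: edge $\{x,y\}$ when $x\ne y$ and $s(x)=y$ for a generator $s$). Bijections $s$ of $X$ extend to $\beta X$ by $\tilde s(\omega)=\{s(A):A\in\omega\}$; $\mathcal G(T)$ is the graph on $\beta X$ with an edge $\{\omega,\omega'\}$ when $\omega\ne\omega'$ and $\tilde s(\omega)=\omega'$ for a generator $s$ of such an action (this does not depend on the chosen action). A rooted graph has radius $r$ if the maximal distance from the root is $r$. $A(T,H)$ is the set of $x\in X$ whose $r$-neighbourhood in $T$ rooted at $x$ is rooted isomorphic to $H$, and $A(\mathcal G(T),H)$ is the set of $\omega\in\beta X$ whose $r$-neighbourhood in $\mathcal G(T)$ is rooted isomorphic to $H$. *)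

(* Defs.v *)
From Stdlib Require Export Reals List.
Open Scope R_scope.

Set Implicit Arguments.

Fixpoint walk_le {W : Type} (E : W -> W -> Prop) (n : nat) (x y : W) : Prop :=
  match n with
  | O => x = y
  | S m => walk_le E m x y \/ exists z, walk_le E m x z /\ E z y
  end.

Definition max_deg_le {W : Type} (E : W -> W -> Prop) (d : nat) : Prop :=
  forall x, exists l : list W, (length l <= d)%nat /\ forall y, E x y -> In y l.

Definition finite_simple_graph {V : Type} (E : V -> V -> Prop) : Prop :=
  (exists l : list V, forall v, In v l) /\
  (forall u v, E u v -> E v u) /\ (forall v, ~ E v v).

Definition dist_eq {W : Type} (E : W -> W -> Prop) (x y : W) (n : nat) : Prop :=
  walk_le E n x y /\ forall m, (m < n)%nat -> ~ walk_le E m x y.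

Definition has_radius {V : Type} (E : V -> V -> Prop) (v0 : V) (r : nat) : Prop :=
  (forall v, walk_le E r v0 v) /\ (exists v, dist_eq E v0 v r).

Definition nbhd_iso {W V : Type} (E : W -> W -> Prop) (r : nat) (x : W)
  (eH : V -> V -> Prop) (v0 : V) : Prop :=
  exists f : V -> W,
    (forall u v, f u = f v -> u = v) /\
    f v0 = x /\
    (forall w, walk_le E r x w <-> exists v, f v = w) /\
    (forall u v, eH u v <-> E (f u) (f v)).

Definition A_set {W V : Type} (E : W -> W -> Prop) (r : nat)
  (eH : V -> V -> Prop) (v0 : V) : W -> Prop :=
  fun x => nbhd_iso E r x eH v0.

Record fg_action (X : Type) := {
  grp : Type;
  gmul : grp -> grp -> grp;
  ginv : grp -> grp;
  gone : grp;
  gmul_assoc : forall a b c, gmul a (gmul b c) = gmul (gmul a b) c;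
  gmul_1l : forall a, gmul gone a = a;
  gmul_Vl : forall a, gmul (ginv a) a = gone;
  act : grp -> X -> X;
  act_one : forall x, act gone x = x;
  act_mul : forall g h x, act (gmul g h) x = act g (act h x);
  gens : list grp;
  gens_sym : forall s, In s gens -> In (ginv s) gens;
  gens_gen : forall g, exists l, (forall s, In s l -> In s gens) /\
                                 g = fold_right gmul gone l
}.

Definition schreier {X : Type} (a : fg_action X) (x y : X) : Prop :=
  x <> y /\ exists s, In s (gens a) /\ act a s x = y.

Definition image {X : Type} (f : X -> X) (A : X -> Prop) : X -> Prop :=
  fun y => exists x, A x /\ f x = y.

Definition is_mean {X : Type} (mu : (X -> Prop) -> R) : Prop :=
  (forall A, 0 <= mu A <= 1) /\
  mu (fun _ => True) = 1 /\
  (forall A B, (forall x, A x -> B x -> False) ->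
     mu (fun x => A x \/ B x) = mu A + mu B).

Definition invariant_mean {X : Type} (a : fg_action X) (mu : (X -> Prop) -> R) : Prop :=
  forall (g : grp a) A, mu (image (act a g) A) = mu A.

Definition is_ultrafilter {X : Type} (w : (X -> Prop) -> Prop) : Prop :=
  ~ w (fun _ => False) /\
  w (fun _ => True) /\
  (forall A B, w A -> w B -> w (fun x => A x /\ B x)) /\
  (forall A B, w A -> (forall x, A x -> B x) -> w B) /\
  (forall A, w A \/ w (fun x => ~ A x)).

Definition betaX (X : Type) := { w : (X -> Prop) -> Prop | is_ultrafilter w }.

Definition U_ {X : Type} (A : X -> Prop) : betaX X -> Prop :=
  fun w => proj1_sig w A.

Definition ext_map {X : Type} (s : X -> X) (w : (X -> Prop) -> Prop) :
  (X -> Prop) -> Prop :=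
  fun B => exists A, w A /\ (forall y, B y <-> image s A y).

Definition graphing {X : Type} (a : fg_action X) (w w' : betaX X) : Prop :=
  w <> w' /\ exists s, In s (gens a) /\
     proj1_sig w' = ext_map (act a s) (proj1_sig w).

Definition is_open {X : Type} (O : betaX X -> Prop) : Prop :=
  forall w, O w -> exists A, proj1_sig w A /\ forall w', U_ A w' -> O w'.

Inductive borel {X : Type} : (betaX X -> Prop) -> Prop :=
| borel_open : forall O, is_open O -> borel O
| borel_compl : forall B, borel B -> borel (fun w => ~ B w)
| borel_union : forall F : nat -> betaX X -> Prop,
    (forall n, borel (F n)) -> borel (fun w => exists n, F n w).

Definition is_compact {X : Type} (K : betaX X -> Prop) : Prop :=
  forall C : (betaX X -> Prop) -> Prop,
    (forall O, C O -> is_open O) ->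
    (forall w, K w -> exists O, C O /\ O w) ->
    exists l, (forall O, In O l -> C O) /\
              forall w, K w -> exists O, In O l /\ O w.

Definition regular_borel_prob {X : Type} (nu : (betaX X -> Prop) -> R) : Prop :=
  (forall B, borel B -> 0 <= nu B) /\
  nu (fun _ => True) = 1 /\
  (forall F : nat -> betaX X -> Prop,
     (forall n, borel (F n)) ->
     (forall m n w, m <> n -> F m w -> F n w -> False) ->
     infinite_sum (fun n => nu (F n)) (nu (fun w => exists n, F n w))) /\
  (forall B, borel B -> forall eps, 0 < eps ->
     exists O, is_open O /\ (forall w, B w -> O w) /\ nu O <= nu B + eps) /\
  (forall B, borel B -> forall eps, 0 < eps ->
     exists K, is_compact K /\ borel K /\ (forall w, K w -> B w) /\
               nu B - eps <= nu K).

(* Main.v *)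
Require Import Defs.
From Stdlib Require Import Reals List Lia Classical ClassicalEpsilon FunctionalExtensionality PropExtensionality ProofIrrelevance.
Open Scope R_scope.

Definition ev {W G : Type} (step : G -> W -> W) (o : W) (p : list G) : W :=
  fold_right step o p.

Fixpoint wl {G : Type} (gs : list G) (n : nat) : list (list G) :=
  match n with
  | O => nil :: nil
  | S m => nil :: flat_map (fun p => map (fun s => s :: p) gs) (wl gs m)
  end.

Lemma in_wl_S {G} (gs : list G) n p :
  In p (wl gs (S n)) <-> p = nil \/ exists s q, p = s :: q /\ In s gs /\ In q (wl gs n).
Proof.
  simpl. split.
  - intros [H|H]; [left; auto|right].
    apply in_flat_map in H. destruct H as [q [Hq H]].
    apply in_map_iff in H. destruct H as [s [Hs Hin]]. exists s, q. auto.
  - intros [H|[s [q [H1 [H2 H3]]]]]; [left; auto|right].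
    apply in_flat_map. exists q. split; auto. apply in_map_iff. exists s; auto.
Qed.

Lemma nil_in_wl {G} (gs : list G) n : In nil (wl gs n).
Proof. destruct n; simpl; auto. Qed.

Lemma wl_mono {G} (gs : list G) n p : In p (wl gs n) -> In p (wl gs (S n)).
Proof.
  revert p; induction n; intros p H.
  - simpl in H. destruct H as [H|[]]. subst. simpl. auto.
  - apply in_wl_S in H. apply in_wl_S.
    destruct H as [H|[s [q [H1 [H2 H3]]]]]; [left; auto|right].
    exists s, q. auto.
Qed.

Definition stepE {W G : Type} (gs : list G) (step : G -> W -> W) (u v : W) : Prop :=
  u <> v /\ exists s, In s gs /\ step s u = v.

Lemma walk_refl {W} (E : W -> W -> Prop) n x : walk_le E n x x.
Proof. induction n; simpl; auto. Qed.

Lemma walk_ev {W G : Type} (gs : list G) (step : G -> W -> W) (E : W -> W -> Prop)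
  (HE : forall u v, E u v <-> stepE gs step u v) (o : W) n w :
  walk_le E n o w <-> exists p, In p (wl gs n) /\ ev step o p = w.
Proof.
  revert w; induction n; intros w; split.
  - simpl. intros H; subst. exists nil. simpl. auto.
  - simpl. intros [p [[H|[]] H2]]. subst. reflexivity.
  - cbn [walk_le]. intros [H|[z [Hz Hzw]]].
    + apply IHn in H. destruct H as [p [Hp Hpw]]. exists p. split; auto. apply wl_mono; auto.
    + apply IHn in Hz. destruct Hz as [p [Hp Hpz]].
      apply HE in Hzw. destruct Hzw as [_ [s [Hs Hsw]]].
      exists (s :: p). split.
      * apply in_wl_S. right. exists s, p. auto.
      * unfold ev in *. simpl. rewrite Hpz. auto.
  - intros [p [Hp Hpw]]. apply in_wl_S in Hp.
    destruct Hp as [Hp|[s [q [H1 [H2 H3]]]]].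
    + subst. cbn [walk_le]. left. apply walk_refl.
    + subst. cbn [walk_le].
      assert (Hq : walk_le E n o (ev step o q)) by (apply IHn; eauto).
      destruct (classic (step s (ev step o q) = ev step o q)) as [Heq|Hne].
      * left. change (ev step o (s :: q)) with (step s (ev step o q)). rewrite Heq. auto.
      * right. exists (ev step o q). split; auto. apply HE. split; auto. exists s; auto.
Qed.

Lemma transfer {W1 W2 G V : Type} (gs : list G) (step1 : G -> W1 -> W1) (step2 : G -> W2 -> W2)
  (E1 : W1 -> W1 -> Prop) (E2 : W2 -> W2 -> Prop)
  (HE1 : forall u v, E1 u v <-> stepE gs step1 u v)
  (HE2 : forall u v, E2 u v <-> stepE gs step2 u v)
  (o1 : W1) (o2 : W2) (r : nat) (eH : V -> V -> Prop) (v0 : V)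
  (Hpat : forall p q, In p (wl gs (S r)) -> In q (wl gs (S r)) ->
      (ev step1 o1 p = ev step1 o1 q <-> ev step2 o2 p = ev step2 o2 q)) :
  nbhd_iso E1 r o1 eH v0 -> nbhd_iso E2 r o2 eH v0.
Proof.
  intros [f1 [Hinj [Hv0 [Hball Hedge]]]].
  assert (Hex : forall v, exists p, In p (wl gs r) /\ ev step1 o1 p = f1 v).
  { intros v. apply (walk_ev gs step1 E1 HE1). apply Hball. eauto. }
  set (P := fun v => proj1_sig (constructive_indefinite_description _ (Hex v))).
  assert (HP : forall v, In (P v) (wl gs r) /\ ev step1 o1 (P v) = f1 v).
  { intros v. unfold P. destruct (constructive_indefinite_description _ (Hex v)); simpl; auto. }
  assert (Hp2 : forall p q, In p (wl gs r) -> In q (wl gs r) ->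
     (ev step1 o1 p = ev step1 o1 q <-> ev step2 o2 p = ev step2 o2 q)).
  { intros; apply Hpat; apply wl_mono; auto. }
  exists (fun v => ev step2 o2 (P v)). split; [|split; [|split]].
  - intros u v H. apply Hinj. destruct (HP u) as [Hu1 Hu2]. destruct (HP v) as [Hv1 Hv2].
    rewrite <- Hu2, <- Hv2. apply Hp2; auto.
  - destruct (HP v0) as [H1 H2].
    assert (H : ev step1 o1 (P v0) = ev step1 o1 nil) by (rewrite H2; simpl; auto).
    apply Hp2 in H; auto. apply nil_in_wl.
  - intros w. rewrite (walk_ev gs step2 E2 HE2). split.
    + intros [q [Hq Hqw]].
      assert (Hw1 : walk_le E1 r o1 (ev step1 o1 q)) by (apply (walk_ev gs step1 E1 HE1); eauto).
      apply Hball in Hw1. destruct Hw1 as [v Hv]. exists v.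
      destruct (HP v) as [H1 H2]. rewrite <- Hqw. apply Hp2; auto. congruence.
    + intros [v Hv]. exists (P v). split; auto. apply HP.
  - intros u v. rewrite Hedge, HE1, HE2. unfold stepE.
    destruct (HP u) as [Hu1 Hu2]; destruct (HP v) as [Hv1 Hv2].
    rewrite <- Hu2, <- Hv2.
    assert (Hsu : forall s, In s gs -> In (s :: P u) (wl gs (S r))).
    { intros s Hs. apply in_wl_S. right. eauto. }
    split; intros [Hne [s [Hs Hst]]]; split.
    + intros H; apply Hne; apply Hp2; auto.
    + exists s; split; auto.
      exact (proj1 (Hpat (s :: P u) (P v) (Hsu s Hs) (wl_mono _ _ _ Hv1)) Hst).
    + intros H; apply Hne; apply Hp2; auto.
    + exists s; split; auto.
      exact (proj2 (Hpat (s :: P u) (P v) (Hsu s Hs) (wl_mono _ _ _ Hv1)) Hst).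
Qed.

Definition adj {X : Type} (e : nat -> X) (f : X -> X) (j k : nat) : Prop := f (e j) = e k \/ f (e k) = e j.
Definition bad {X : Type} (e : nat -> X) (f : X -> X) (l : list nat) (k c : nat) : Prop :=
  exists j, (j < k)%nat /\ adj e f j k /\ nth j l 0%nat = c.
Definition pick {X : Type} (e : nat -> X) (f : X -> X) (l : list nat) (k : nat) : nat :=
  if excluded_middle_informative (bad e f l k 0) then
    if excluded_middle_informative (bad e f l k 1) then 2%nat else 1%nat
  else 0%nat.
Fixpoint cols {X : Type} (e : nat -> X) (f : X -> X) (n : nat) : list nat :=
  match n with O => nil | S m => cols e f m ++ pick e f (cols e f m) m :: nil end.
Definition col {X : Type} (e : nat -> X) (f : X -> X) (j : nat) : nat := pick e f (cols e f j) j.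

Lemma cols_len {X : Type} (e : nat -> X) (f : X -> X) n : length (cols e f n) = n.
Proof. induction n; simpl; auto. rewrite length_app, IHn. simpl. lia. Qed.

Lemma cols_nth {X : Type} (e : nat -> X) (f : X -> X) n j : (j < n)%nat -> nth j (cols e f n) 0%nat = col e f j.
Proof.
  induction n; intros H; [lia|]. simpl.
  destruct (Nat.eq_dec j n) as [->|Hne].
  - rewrite app_nth2; rewrite cols_len; [|lia]. rewrite Nat.sub_diag. reflexivity.
  - rewrite app_nth1; [|rewrite cols_len; lia]. apply IHn. lia.
Qed.

Lemma pick_le {X : Type} (e : nat -> X) (f : X -> X) l k : (pick e f l k <= 2)%nat.
Proof. unfold pick. destruct excluded_middle_informative; [destruct excluded_middle_informative|]; lia. Qed.


Lemma pick_ok {X} (e : nat -> X) (f : X -> X)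
  (einj : forall m n, e m = e n -> m = n) (finj : forall x y, f x = f y -> x = y) l k :
  ~ bad e f l k (pick e f l k).
Proof.
  unfold pick. destruct (excluded_middle_informative (bad e f l k 0)) as [B0|B0]; [|exact B0].
  destruct (excluded_middle_informative (bad e f l k 1)) as [B1|B1]; [|exact B1].
  intros B2.
  destruct B0 as [j0 [_ [A0 C0]]]. destruct B1 as [j1 [_ [A1 C1]]]. destruct B2 as [j2 [_ [A2 C2]]].
  unfold adj in *.
  assert (HA : forall i j, f (e i) = e k -> f (e j) = e k -> i = j).
  { intros i j Hi Hj. apply einj, finj. congruence. }
  assert (HB : forall i j, f (e k) = e i -> f (e k) = e j -> i = j).
  { intros i j Hi Hj. apply einj. congruence. }
  destruct A0 as [A0|A0]; destruct A1 as [A1|A1]; destruct A2 as [A2|A2];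
  first [ pose proof (HA _ _ A0 A1) | pose proof (HB _ _ A0 A1)
        | pose proof (HA _ _ A0 A2) | pose proof (HB _ _ A0 A2)
        | pose proof (HA _ _ A1 A2) | pose proof (HB _ _ A1 A2) ]; subst; congruence.
Qed.

Lemma coloring {X} (e : nat -> X)
  (einj : forall m n, e m = e n -> m = n) (esurj : forall x, exists n, e n = x)
  (f : X -> X) (finj : forall x y, f x = f y -> x = y) :
  exists c : X -> nat, (forall x, (c x <= 2)%nat) /\ (forall x, f x <> x -> c (f x) <> c x).
Proof.
  set (idx := fun x => proj1_sig (constructive_indefinite_description _ (esurj x))).
  assert (Hidx : forall x, e (idx x) = x).
  { intros x. unfold idx. destruct constructive_indefinite_description; auto. }
  exists (fun x => col e f (idx x)). split.
  - intros x. apply pick_le.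
  - intros x Hfx Heq.
    set (k := idx x) in *. set (i := idx (f x)) in *.
    assert (Ek : e k = x) by apply Hidx. assert (Ei : e i = f x) by apply Hidx.
    assert (Hik : i <> k). { intros H. apply Hfx. congruence. }
    destruct (proj1 (Nat.lt_gt_cases i k) Hik) as [Hlt|Hlt].
    + apply (pick_ok e f einj finj (cols e f k) k). exists i. split; [exact Hlt|split].
      * right. congruence.
      * rewrite cols_nth by exact Hlt; exact Heq.
    + apply (pick_ok e f einj finj (cols e f i) i). exists k. split; [exact Hlt|split].
      * left. congruence.
      * rewrite cols_nth by exact Hlt; symmetry; exact Heq.
Qed.

Definition pushp {X : Type} (phi : X -> X) (w : (X -> Prop) -> Prop) : (X -> Prop) -> Prop :=
  fun B => w (fun x => B (phi x)).

Lemma push_uf {X : Type} (phi : X -> X) w : is_ultrafilter w -> is_ultrafilter (pushp phi w).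
Proof.
  unfold is_ultrafilter, pushp. intros [H1 [H2 [H3 [H4 H5]]]].
  split; [exact H1|split; [exact H2|split; [|split]]].
  - intros A B HA HB. apply (H3 _ _ HA HB).
  - intros A B HA HAB. apply (H4 _ _ HA). intros x; apply HAB.
  - intros A. apply H5.
Qed.

Definition push {X : Type} (phi : X -> X) (w : betaX X) : betaX X :=
  exist _ (pushp phi (proj1_sig w)) (push_uf phi _ (proj2_sig w)).

Lemma sig_eq {X : Type} (u v : betaX X) : proj1_sig u = proj1_sig v -> u = v.
Proof. destruct u, v; simpl; intros; subst; f_equal; apply proof_irrelevance. Qed.

Lemma uf_up {X : Type} (w : betaX X) (A B : X -> Prop) :
  proj1_sig w A -> (forall x, A x -> B x) -> proj1_sig w B.
Proof. destruct (proj2_sig w) as [_ [_ [_ [H _]]]]. apply H. Qed.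

Lemma uf_and {X : Type} (w : betaX X) (A B : X -> Prop) :
  proj1_sig w A -> proj1_sig w B -> proj1_sig w (fun x => A x /\ B x).
Proof. destruct (proj2_sig w) as [_ [_ [H _]]]. apply H. Qed.

Lemma uf_true {X : Type} (w : betaX X) : proj1_sig w (fun _ => True).
Proof. destruct (proj2_sig w) as [_ [H _]]. apply H. Qed.

Lemma uf_dich {X : Type} (w : betaX X) (A : X -> Prop) :
  proj1_sig w A \/ proj1_sig w (fun x => ~ A x).
Proof. destruct (proj2_sig w) as [_ [_ [_ [_ H]]]]. apply H. Qed.


Lemma uf_nonempty {X : Type} (w : betaX X) (A : X -> Prop) :
  proj1_sig w A -> exists x, A x.
Proof.
  intros H. apply NNPP. intros Hn.
  assert (H' : proj1_sig w (fun _ => False)).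
  { apply (uf_up w A); auto. intros x Hx. apply Hn. eauto. }
  destruct (proj2_sig w) as [H0 _]. exact (H0 H').
Qed.

Lemma uf_list {X I : Type} (w : betaX X) (L : list I) (P : I -> X -> Prop) :
  (forall i, In i L -> proj1_sig w (P i)) ->
  proj1_sig w (fun x => forall i, In i L -> P i x).
Proof.
  induction L as [|i L IH]; intros H.
  - apply (uf_up w _ _ (uf_true w)). intros x _ i [].
  - assert (H1 : proj1_sig w (P i)) by (apply H; simpl; auto).
    assert (H2 := IH (fun j Hj => H j (or_intror Hj))).
    apply (uf_up w _ _ (uf_and w _ _ H1 H2)). intros x [Hx1 Hx2] j [<-|Hj]; auto.
Qed.

Lemma gmul_Vr {X : Type} (a : fg_action X) g : gmul a g (ginv a g) = gone a.
Proof.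
  set (k := ginv a g).
  rewrite <- (gmul_1l a (gmul a g k)).
  rewrite <- (gmul_Vl a k) at 1.
  rewrite <- (gmul_assoc a (ginv a k) k (gmul a g k)).
  rewrite (gmul_assoc a k g k). unfold k at 2. rewrite (gmul_Vl a g).
  rewrite (gmul_1l a k). apply gmul_Vl.
Qed.

Lemma act_inv_l {X : Type} (a : fg_action X) g x : act a (ginv a g) (act a g x) = x.
Proof. rewrite <- act_mul, gmul_Vl, act_one. reflexivity. Qed.

Lemma act_inv_r {X : Type} (a : fg_action X) g x : act a g (act a (ginv a g) x) = x.
Proof. rewrite <- act_mul, gmul_Vr, act_one. reflexivity. Qed.

Lemma ext_map_push {X : Type} (a : fg_action X) (w : betaX X) s :
  ext_map (act a s) (proj1_sig w) = pushp (act a s) (proj1_sig w).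
Proof.
  apply functional_extensionality; intros B. apply propositional_extensionality.
  unfold ext_map, pushp, image. split.
  - intros [A [HA HB]]. apply (uf_up w A); auto. intros x Hx. apply HB. exists x; auto.
  - intros H. exists (fun x => B (act a s x)). split; auto. intros y; split.
    + intros Hy. exists (act a (ginv a s) y). rewrite act_inv_r. auto.
    + intros [x [Hx <-]]. auto.
Qed.

Definition stepB {X : Type} (a : fg_action X) (s : grp a) (w : betaX X) : betaX X :=
  push (act a s) w.

Lemma graphing_iff {X : Type} (a : fg_action X) u v :
  graphing a u v <-> stepE (gens a) (stepB a) u v.
Proof.
  unfold graphing, stepE. split; intros [Hne [s [Hs H]]]; split; auto; exists s; split; auto.
  - apply sig_eq. rewrite H, ext_map_push. reflexivity.
  - rewrite <- H. simpl. rewrite ext_map_push. reflexivity.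
Qed.

Lemma ev_push {X : Type} (a : fg_action X) (w : betaX X) p :
  ev (stepB a) w p = push (fun x => ev (act a) x p) w.
Proof.
  induction p as [|s p IH].
  - apply sig_eq. reflexivity.
  - change (ev (stepB a) w (s :: p)) with (stepB a s (ev (stepB a) w p)).
    rewrite IH. apply sig_eq. reflexivity.
Qed.

Lemma ev_act {X : Type} (a : fg_action X) x p :
  ev (act a) x p = act a (fold_right (gmul a) (gone a) p) x.
Proof.
  induction p as [|s p IH].
  - symmetry. apply act_one.
  - change (ev (act a) x (s :: p)) with (act a s (ev (act a) x p)). rewrite IH.
    simpl. rewrite act_mul. reflexivity.
Qed.

Lemma push_ext {X : Type} (phi psi : X -> X) w :
  (forall x, phi x = psi x) -> push phi w = push psi w.
Proof. intros H. assert (phi = psi) by (apply functional_extensionality; auto). subst; auto. Qed.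

Lemma key {X : Type} (e : nat -> X)
  (einj : forall m n, e m = e n -> m = n) (esurj : forall x, exists n, e n = x)
  (a : fg_action X) g h (w : betaX X) :
  push (act a g) w = push (act a h) w <-> proj1_sig w (fun x => act a g x = act a h x).
Proof.
  split.
  - intros Heq. destruct (uf_dich w (fun x => act a g x = act a h x)) as [H|H]; auto. exfalso.
    set (f := fun x => act a (ginv a h) (act a g x)).
    assert (finj : forall x y, f x = f y -> x = y).
    { unfold f. intros x y Hxy.
      assert (H1 : act a g x = act a g y).
      { rewrite <- (act_inv_r a h (act a g x)), <- (act_inv_r a h (act a g y)). congruence. }
      rewrite <- (act_inv_l a g x), <- (act_inv_l a g y). congruence. }
    assert (Hfix : forall x, act a g x <> act a h x -> f x <> x).
    { unfold f. intros x Hx Hfx. apply Hx. rewrite <- Hfx at 2. rewrite act_inv_r. reflexivity. }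
    assert (Hfk : forall k x, act a g k = act a h x -> f k = x).
    { unfold f. intros k x Hk. rewrite Hk. apply act_inv_l. }
    destruct (coloring e einj esurj f finj) as [c [Hc2 Hc]].
    set (K := fun i x => act a g x <> act a h x /\ c x = i).
    assert (HK : exists i, proj1_sig w (K i)).
    { destruct (uf_dich w (K 0%nat)) as [H0|H0]; [eauto|].
      destruct (uf_dich w (K 1%nat)) as [H1|H1]; [eauto|].
      destruct (uf_dich w (K 2%nat)) as [H2|H2]; [eauto|].
      exfalso.
      destruct (uf_nonempty w _ (uf_and w _ _ H (uf_and w _ _ H0 (uf_and w _ _ H1 H2))))
        as [x [Hx [Hx0 [Hx1 Hx2]]]].
      unfold K in *. specialize (Hc2 x).
      destruct (c x) as [|[|[|n]]] eqn:E; [apply Hx0|apply Hx1|apply Hx2|lia]; auto. }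
    destruct HK as [i Hi].
    set (B := fun y => exists k, K i k /\ act a g k = y).
    assert (H1 : proj1_sig (push (act a g) w) B).
    { simpl. unfold pushp. apply (uf_up w _ _ Hi). intros x Hx. exists x; auto. }
    rewrite Heq in H1. simpl in H1. unfold pushp in H1.
    destruct (uf_nonempty w _ (uf_and w _ _ H1 Hi)) as [x [[k [Hk Hkx]] Hx]].
    apply Hfk in Hkx. destruct Hk as [Hk1 Hk2]. destruct Hx as [_ Hx2].
    apply (Hc k (Hfix k Hk1)). rewrite Hkx. congruence.
  - intros H. apply sig_eq. simpl. unfold pushp. apply functional_extensionality; intros B.
    apply propositional_extensionality.
    split; intros HB; apply (uf_up w _ _ (uf_and w _ _ HB H)); intros x [Hx Hgh].
    + rewrite <- Hgh. auto.
    + rewrite Hgh. auto.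
Qed.

Lemma main_iff {X : Type} (e : nat -> X)
  (einj : forall m n, e m = e n -> m = n) (esurj : forall x, exists n, e n = x)
  (T : X -> X -> Prop) (a : fg_action X) (HT : forall x y, T x y <-> schreier a x y)
  (r : nat) {V : Type} (eH : V -> V -> Prop) (v0 : V) (w : betaX X) :
  nbhd_iso (graphing a) r w eH v0 <-> proj1_sig w (fun x => nbhd_iso T r x eH v0).
Proof.
  assert (HT' : forall x y, T x y <-> stepE (gens a) (act a) x y).
  { intros x y. rewrite HT. reflexivity. }
  assert (Hpair : forall p q, proj1_sig w (fun x => ev (act a) x p = ev (act a) x q <->
                                ev (stepB a) w p = ev (stepB a) w q)).
  { intros p q.
    assert (Hk : ev (stepB a) w p = ev (stepB a) w q <->
                 proj1_sig w (fun x => ev (act a) x p = ev (act a) x q)).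
    { rewrite !ev_push.
      rewrite (push_ext _ _ w (fun x => ev_act a x p)).
      rewrite (push_ext _ _ w (fun x => ev_act a x q)).
      rewrite (key e einj esurj).
      assert (Ef : (fun x => ev (act a) x p = ev (act a) x q) =
                   (fun x => act a (fold_right (gmul a) (gone a) p) x =
                             act a (fold_right (gmul a) (gone a) q) x)).
      { apply functional_extensionality; intros x. rewrite !ev_act. reflexivity. }
      rewrite Ef. reflexivity. }
    destruct (classic (ev (stepB a) w p = ev (stepB a) w q)) as [Hy|Hn].
    - apply (uf_up w _ _ (proj1 Hk Hy)). intros x Hx. split; auto.
    - destruct (uf_dich w (fun x => ev (act a) x p = ev (act a) x q)) as [H|H].
      + exfalso. apply Hn. apply Hk. exact H.
      + apply (uf_up w _ _ H). intros x Hx. split; intros Z; contradiction. }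
  set (L := list_prod (wl (gens a) (S r)) (wl (gens a) (S r))).
  assert (HAg : proj1_sig w (fun x => forall pq, In pq L ->
     (ev (act a) x (fst pq) = ev (act a) x (snd pq) <->
      ev (stepB a) w (fst pq) = ev (stepB a) w (snd pq)))).
  { apply uf_list. intros [p q] _. apply Hpair. }
  split.
  - intros Hiso. apply (uf_up w _ _ HAg). intros x Hx.
    apply (transfer (gens a) (stepB a) (act a) (graphing a) T (graphing_iff a) HT' w x r eH v0);
      auto.
    intros p q Hp Hq. symmetry. apply (Hx (p, q)). apply in_prod; auto.
  - intros HA. destruct (uf_nonempty w _ (uf_and w _ _ HA HAg)) as [x [Hx1 Hx2]].
    apply (transfer (gens a) (act a) (stepB a) T (graphing a) HT' (graphing_iff a) x w r eH v0);
      auto.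
    intros p q Hp Hq. apply (Hx2 (p, q)). apply in_prod; auto.
Qed.

Theorem proposition4p3
  (X : Type)
  (HX : exists f : nat -> X, (forall m n, f m = f n -> m = n) /\ (forall x, exists n, f n = x))
  (T : X -> X -> Prop) (d : nat)
  (a : fg_action X)
  (HT : forall x y, T x y <-> schreier a x y)
  (HdegT : max_deg_le T d)
  (mu : (X -> Prop) -> R)
  (Hmean : is_mean mu)
  (Hinv : invariant_mean a mu)
  (nu : (betaX X -> Prop) -> R)
  (Hnu : regular_borel_prob nu)
  (Hnumu : forall A : X -> Prop, nu (U_ A) = mu A)
  (r : nat) (Hr : (1 <= r)%nat)
  (V : Type) (eH : V -> V -> Prop) (v0 : V)
  (HH : finite_simple_graph eH)
  (Hrad : has_radius eH v0 r)
  (HdegH : max_deg_le eH d) :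
  mu (A_set T r eH v0) = nu (A_set (graphing a) r eH v0).
Proof.
  destruct HX as [e [einj esurj]].
  assert (Heq : A_set (graphing a) r eH v0 = U_ (A_set T r eH v0)).
  { apply functional_extensionality; intros w. apply propositional_extensionality.
    unfold A_set, U_. apply (main_iff e einj esurj T a HT). }
  rewrite Heq, Hnumu. reflexivity.
Qed.
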